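(* Let $l>0$ and $g>0$, and for real parameters $\Lambda_1,\Lambda_2$ let $\bar U(\theta)=\Lambda_1\cos 2\theta+\Lambda_2\sin 2\theta-gl\cos\theta$ with $l=1$, $g=1$, i.e. $\bar U(\theta)=\Lambda_1\cos 2\theta+\Lambda_2\sin 2\theta-\cos\theta$. Then $\bar U$ has a degenerate critical point, i.e. there exists $\theta\in\mathbb{R}$ with $\bar U'(\theta)=0$ and $\bar U''(\theta)=0$, if and only if $(\Lambda_1,\Lambda_2)$ lies on the curve $$\Gamma_1=\left\{\left(\tfrac{\cos^3\theta}{2}-\tfrac{3\cos\theta}{4},\ \tfrac{\sin^3\theta}{2}\right):\ \theta\in\mathbb{R}\right\}.$$
   Context: $\bar U$ is the effective potential of the averaged Hamiltonian $\bar H(\theta,p)=\frac{p^2}{2l^2}+\bar U(\theta)$ of a pendulum (rod length $l$, unit mass, gravity $g$) whose suspension point is subjected to small stochastic vibrations; here $l=g=1$. The parameters $\Lambda_1,\Lambda_2$ are arbitrary real numbers. *)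

(* Defs.v *)
From Stdlib Require Import Reals.
From Coquelicot Require Import Coquelicot.
Open Scope R_scope.

Definition Ubar (L1 L2 : R) (th : R) : R :=
  L1 * cos (2 * th) + L2 * sin (2 * th) - cos th.

Definition Gamma1 (L1 L2 : R) : Prop :=
  exists t : R, L1 = (cos t) ^ 3 / 2 - 3 * cos t / 4 /\ L2 = (sin t) ^ 3 / 2.

(* Main.v *)
Require Import Defs.
From Stdlib Require Import Reals Lra Psatz.
From Coquelicot Require Import Coquelicot.
Open Scope R_scope.

Lemma d1 L1 L2 th : is_derive (Ubar L1 L2) th (-2*L1*sin(2*th) + 2*L2*cos(2*th) + sin th).
Proof. unfold Ubar. auto_derive; auto. ring. Qed.
Lemma d2 L1 L2 th : is_derive (fun th => -2*L1*sin(2*th) + 2*L2*cos(2*th) + sin th) th (-4*L1*cos(2*th) - 4*L2*sin(2*th) + cos th).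
Proof. auto_derive; auto. ring. Qed.

Lemma D1 L1 L2 th : Derive (Ubar L1 L2) th = -2*L1*sin(2*th) + 2*L2*cos(2*th) + sin th.
Proof. apply is_derive_unique, d1. Qed.

Lemma D2 L1 L2 th : Derive_n (Ubar L1 L2) 2 th = -4*L1*cos(2*th) - 4*L2*sin(2*th) + cos th.
Proof.
  simpl. rewrite (Derive_ext _ (fun th => -2*L1*sin(2*th) + 2*L2*cos(2*th) + sin th)).
  - apply is_derive_unique, d2.
  - intro; apply D1.
Qed.

Lemma alg (L1 L2 c2 s2 cc ss : R) :
  c2*c2 + s2*s2 = 1 ->
  -2 * L1 * s2 + 2 * L2 * c2 + ss = 0 ->
  -4 * L1 * c2 - 4 * L2 * s2 + cc = 0 ->
  L1 = c2*cc/4 + s2*ss/2 /\ L2 = s2*cc/4 - c2*ss/2.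
Proof.
  intros Q H1 H2.
  assert (A : L1*c2+L2*s2 = cc/4) by lra.
  assert (B : L2*c2 - L1*s2 = -ss/2) by lra.
  split.
  - transitivity (L1*(c2*c2+s2*s2)); [rewrite Q; ring|].
    transitivity (c2*(L1*c2+L2*s2) - s2*(L2*c2 - L1*s2)); [ring|].
    rewrite A, B. field.
  - transitivity (L2*(c2*c2+s2*s2)); [rewrite Q; ring|].
    transitivity (s2*(L1*c2+L2*s2) + c2*(L2*c2 - L1*s2)); [ring|].
    rewrite A, B. field.
Qed.

Lemma back (c s : R) : s*s = 1 - c*c ->
  -2 * (c ^ 3 / 2 - 3 * c / 4) * (2 * s * - c) +
  2 * (s ^ 3 / 2) * (- c * - c - s * s) + s = 0 /\
  -4 * (c ^ 3 / 2 - 3 * c / 4) * (- c * - c - s * s) -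
  4 * (s ^ 3 / 2) * (2 * s * - c) + - c = 0.
Proof.
  intros H. assert (U : s*s + c*c - 1 = 0) by lra. split.
  - transitivity (- s * (s*s + c*c - 1) * (s*s + 1 - 2*c*c)); [field|].
    rewrite U; ring.
  - transitivity (c * (s*s + c*c - 1) * (4*s*s + 1 - 2*c*c)); [field|].
    rewrite U; ring.
Qed.

Theorem mainTheorem1 (L1 L2 : R) :
  (exists th : R, Derive (Ubar L1 L2) th = 0 /\ Derive_n (Ubar L1 L2) 2 th = 0)
  <-> Gamma1 L1 L2.
Proof.
  split.
  - intros [th [H1 H2]]. rewrite D1 in H1. rewrite D2 in H2.
    rewrite sin_2a, cos_2a in H1, H2.
    pose proof (sin2_cos2 th) as P. unfold Rsqr in P.
    destruct (alg L1 L2 (cos th * cos th - sin th * sin th) (2 * sin th * cos th) (cos th) (sin th)) as [E1 E2]; [nra|lra|lra|].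
    exists (PI - th). rewrite Rtrigo_facts.cos_pi_minus, sin_PI_x.
    split.
    + rewrite E1. pose proof (f_equal (fun x => x * cos th) P) as P'. simpl in P'. nra.
    + rewrite E2. pose proof (f_equal (fun x => x * sin th) P) as P'. simpl in P'. nra.
  - intros [t [E1 E2]]. exists (PI - t). rewrite D1, D2.
    rewrite sin_2a, cos_2a, Rtrigo_facts.cos_pi_minus, sin_PI_x.
    pose proof (sin2_cos2 t) as P. unfold Rsqr in P.
    subst L1 L2. apply back; lra.
Qed.
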